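(* There is a polynomial-time algorithm which, given a finite simple graph $G$, decides whether $crx_1(G)\le 3$, i.e. whether $G$ admits an edge-colouring with at most $3$ colours in which every vertex lies on a rainbow cycle.
   Context: All graphs are finite and simple. An edge-coloured cycle is rainbow if all its edges have distinct colours. For $k\ge 1$, $\mathcal{F}_k$ is the family of graphs in which any $k$ vertices lie on a common cycle. For $G\in\mathcal{F}_k$, a $k$-rainbow cycle colouring of $G$ is an edge-colouring such that any $k$ vertices of $G$ lie on a common rainbow cycle; $crx_k(G)$ is the minimum number of colours in a $k$-rainbow cycle colouring of $G$ (for $G\notin\mathcal{F}_k$ no such colouring exists, so $crx_k(G)\le \ell$ is false for every $\ell$). *)

(* Defs.v *)
From mathcomp Require Import all_boot.
Set Implicit Arguments. Unset Strict Implicit. Unset Printing Implicit Defensive.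

(* A finite simple graph on vertex set 'I_n is a symmetric irreflexive
   relation e : rel 'I_n (checked as hypotheses in the theorem). *)

Definition is_graph_cycle (n : nat) (e : rel 'I_n) (c : seq 'I_n) : bool :=
  [&& 3 <= size c, uniq c & cycle e c].

(* An edge-colouring is a function col with col x y = col y x; only its
   values on edges matter.  The edges of the cycle c are the pairs
   (c_i, c_{i+1 mod size c}). *)
Definition cycle_edge_colours (n : nat) (col : 'I_n -> 'I_n -> nat)
    (c : seq 'I_n) : seq nat :=
  map (fun p => col p.1 p.2) (zip c (rot 1 c)).

Definition rainbow (n : nat) (col : 'I_n -> 'I_n -> nat) (c : seq 'I_n) : bool :=
  uniq (cycle_edge_colours col c).

Definition k_rainbow_cycle_colouring (k n : nat) (e : rel 'I_n)
    (col : 'I_n -> 'I_n -> nat) : Prop :=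
  forall S : {set 'I_n}, #|S| = k ->
    exists c : seq 'I_n, [/\ is_graph_cycle e c, rainbow col c & {subset S <= c}].

(* If no k-rainbow cycle
   colouring exists this is false for every l, as in the paper. *)
Definition crx_le (k n : nat) (e : rel 'I_n) (l : nat) : Prop :=
  exists col : 'I_n -> 'I_n -> nat,
    [/\ forall x y, col x y = col y x,
        forall x y, col x y < l
      & k_rainbow_cycle_colouring k e col].

(* Single two-way-infinite tape.  Tape symbols are 'I_s.+3 where 0 is the
   blank, 1 encodes bit 0 and 2 encodes bit 1.  States are 'I_q.+1.
   A transition of None means the machine halts. *)
Inductive move := MoveL | MoveR | Stay.

Record TM := {
  tm_q : nat;
  tm_s : nat;
  tm_start : 'I_tm_q.+1;
  tm_delta : 'I_tm_q.+1 -> 'I_tm_s.+3 -> option ('I_tm_q.+1 * 'I_tm_s.+3 * move);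
  tm_accept : pred 'I_tm_q.+1
}.

Section TMSemantics.
Variable M : TM.
Notation St := 'I_(tm_q M).+1.
Notation Sym := 'I_(tm_s M).+3.

Definition blank : Sym := ord0.
Definition bit_sym (b : bool) : Sym := inord (if b then 2 else 1).

(* configuration: state, left tape (nearest cell first), head symbol,
   right tape (nearest cell first); tape cells beyond are blank. *)
Record config := Config {
  cf_state : St; cf_left : seq Sym; cf_head : Sym; cf_right : seq Sym }.

Definition step (c : config) : option config :=
  match tm_delta (cf_state c) (cf_head c) with
  | None => None
  | Some (q', b, m) =>
    Some match m with
      | Stay => Config q' (cf_left c) b (cf_right c)
      | MoveL => match cf_left c with
                 | [::] => Config q' [::] blank (b :: cf_right c)
                 | a :: l => Config q' l a (b :: cf_right c)
                 end
      | MoveR => match cf_right c with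
                 | [::] => Config q' (b :: cf_left c) blank [::]
                 | a :: r => Config q' (b :: cf_left c) a r
                 end
      end
  end.

Fixpoint run (t : nat) (c : config) : option config :=
  match step c with
  | None => Some c
  | Some c' => if t is t'.+1 then run t' c' else None
  end.

Definition init_config (w : seq bool) : config :=
  match map bit_sym w with
  | [::] => Config (tm_start M) [::] blank [::]
  | a :: r => Config (tm_start M) [::] a r
  end.
End TMSemantics.

Definition encode_graph (n : nat) (e : rel 'I_n) : seq bool :=
  [seq e i j | i <- enum 'I_n, j <- enum 'I_n].

Definition decides_graph_property_in_poly_time
    (M : TM) (P : forall n, rel 'I_n -> Prop) : Prop :=
  exists a d : nat,
    forall (n : nat) (e : rel 'I_n), symmetric e -> irreflexive e ->
      let w := encode_graph e in
      exists cf, @run M (a * (size w).+1 ^ d) (@init_config M w) = Some cf /\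
                 (tm_accept (@cf_state M cf) <-> P n e).

(* Main.v *)
Require Import Defs.
From mathcomp Require Import all_boot zify.
Set Implicit Arguments. Unset Strict Implicit. Unset Printing Implicit Defensive.

Definition tricover n (e : rel 'I_n) : Prop :=
  forall v : 'I_n, exists u w, [&& e v u, e u w & e v w].

Lemma crx_tri n (e : rel 'I_n) : symmetric e -> crx_le 1 e 3 -> tricover e.
Proof.
move=> esym [col [_ colb H]] v.
have [c [/and3P [c3 uc cyc] rb sub]] := H [set v] (cards1 v).
have vc : v \in c by apply: sub; rewrite in_set1.
have sz : size c <= 3.
  have := uniq_leq_size (s2 := iota 0 3) rb.
  rewrite size_map size_zip size_rot minnn size_iota; apply.
  by move=> x /mapP [p _ ->]; rewrite mem_iota /= add0n colb.
have {sz c3} : size c = 3 by apply/eqP; rewrite eqn_leq sz c3.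
case: c uc cyc vc {sub rb} => [|x [|y [|z [|]]]] //= _ .
rewrite !andbT => /and3P [exy eyz ezx].
rewrite !inE => /or3P [] /eqP -> _.
- by exists y, z; rewrite exy eyz esym ezx.
- by exists z, x; rewrite eyz ezx esym exy.
- by exists x, y; rewrite ezx exy esym eyz.
Qed.

Section Conv.
Variables (n : nat) (e : rel 'I_n).
Hypotheses (esym : symmetric e) (eirr : irreflexive e).
Notation T := ('I_n * 'I_n * 'I_n)%type.
Definition istri (t : T) := [&& e t.1.1 t.1.2, e t.1.2 t.2 & e t.1.1 t.2].
Definition inT (v : 'I_n) (t : T) := [|| v == t.1.1, v == t.1.2 | v == t.2].
Definition Pfam (F : {set T}) :=
  [forall v, [exists t in F, inT v t]] && [forall t in F, istri t].

Lemma tri_conv : tricover e -> crx_le 1 e 3.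
Proof.
move=> tc.
have [G minG] : {G | minset Pfam G}.
  apply: ex_minset; exists [set t | istri t].
  apply/andP; split; last by apply/forallP=> t; apply/implyP; rewrite inE.
  apply/forallP=> v; have [u [w H]] := tc v.
  by apply/existsP; exists (v, u, w); rewrite inE /inT /istri /= H eqxx.
have /minsetP [/andP [covG triG] minG'] := minG.
pose privb t v := [forall t' in G, inT v t' ==> (t' == t)].
have priv : forall t, t \in G -> exists v, inT v t && privb t v.
  move=> t tG.
  have sub : G :\ t \subset G by apply: subsetDl.
  have nP : ~~ Pfam (G :\ t).
    apply/negP=> PB; have := minG' _ PB sub => /setP /(_ t).
    by rewrite !inE eqxx tG.
  move: nP; rewrite /Pfam negb_and; case/orP; last first.
    move/forallPn=> [t' /=]; rewrite negb_imply inE => /andP [/andP [_ t'G]].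
    by move: triG => /forallP /(_ t') /implyP /(_ t'G) ->.
  move/forallPn=> [v /=] /existsPn nv.
  move: covG => /forallP /(_ v) /existsP [t0 /andP [t0G vt0]].
  have t0t : t0 = t.
    apply/eqP; apply/negPn/negP=> ne; have := nv t0.
    by rewrite !inE ne t0G vt0.
  subst t0; exists v; rewrite vt0 /=.
  apply/forallP=> t'; apply/implyP=> t'G; apply/implyP=> vt'.
  apply/negPn/negP=> ne; have := nv t'; by rewrite !inE ne t'G vt'.
pose rotv (t : T) : T := if privb t t.1.1 then t else
   if privb t t.1.2 then (t.1.2, t.2, t.1.1) else (t.2, t.1.1, t.1.2).
have inT_rot : forall t v, inT v (rotv t) = inT v t.
  move=> [[a b] c] v; rewrite /rotv /inT /=.
  by case: ifP => _ //; case: ifP => _ /=; rewrite ?orbA ?[(_ || (v == a))]orbC // -?orbA ?[_ || (v == c)]orbC ?orbA.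
have privrot : forall t, t \in G -> privb t (rotv t).1.1.
  move=> [[a b] c] tG; rewrite /rotv /=.
  have [v /andP [vt pv]] := priv _ tG.
  case: ifP => // /negbT pa; case: ifP => // /negbT pb.
  move: vt; rewrite /inT /= => /or3P [] /eqP vE; subst v => //.
    by rewrite pv in pa.
  by rewrite pv in pb.
pose F := [set rotv t | t in G].
have Fpriv : forall f f', f \in F -> f' \in F -> inT f.1.1 f' -> f' = f.
  move=> f f' /imsetP [t tG ->] /imsetP [t' t'G ->]; rewrite inT_rot => H.
  have := privrot _ tG => /forallP /(_ t') /implyP /(_ t'G) /implyP /(_ H) /eqP.
  by move=> ->.
have Ftri : forall f, f \in F -> istri f.
  move=> f /imsetP [[[a b] c] tG ->].
  have := triG => /forallP /(_ ((a, b), c)) /implyP /(_ tG).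
  rewrite /istri /rotv /=.
  case: ifP => _ //; case: ifP => _ /= /and3P [h1 h2 h3].
    by rewrite h2 (esym c a) h3 (esym b a) h1.
  by rewrite (esym c a) h3 h1 (esym c b) h2.
pose g (x y : 'I_n) := if [exists f in F, (f.1.1 == x) && (f.1.2 == y)] then 1
     else if [exists f in F, (f.1.1 == x) && (f.2 == y)] then 2 else 0.
have gnz : forall x y, g x y != 0 -> exists2 f, f \in F & (f.1.1 == x) && inT y f.
  move=> x y; rewrite /g; case: existsP => [[f /and3P [fF /eqP <- /eqP <-]] _|_].
    by exists f => //; rewrite eqxx /inT eqxx orbT.
  case: existsP => [[f /and3P [fF /eqP <- /eqP <-]] _|_] //.
  by exists f => //; rewrite eqxx /inT eqxx !orbT.
have gle : forall x y, g x y < 3.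
  by move=> x y; rewrite /g; case: ifP => //; case: ifP.
pose col x y := maxn (g x y) (g y x).
exists col; split.
- by move=> x y; rewrite /col maxnC.
- by move=> x y; rewrite /col gtn_max !gle.
move=> S /eqP /cards1P [v ->].
move: covG => /forallP /(_ v) /existsP [t /andP [tG vt]].
have fF : rotv t \in F by apply: imset_f.
have vf : inT v (rotv t) by rewrite inT_rot.
move: (rotv t) fF (Ftri _ fF) vf => [[a b] c] fF /and3P [/= eab ebc eac] vf.
have nab : a != b by apply: contraTneq eab => ->; rewrite eirr.
have nbc : b != c by apply: contraTneq ebc => ->; rewrite eirr.
have nac : a != c by apply: contraTneq eac => ->; rewrite eirr.
have g0 : forall x y, x \in [:: b; c] -> g x y = 0.
  move=> x y xbc; apply/eqP/negPn/negP => /gnz [f' f'F /andP [/eqP fx _]].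
  have : inT f'.1.1 (a, b, c) by rewrite fx; move: xbc; rewrite !inE /inT /= => /orP [] ->; rewrite ?orbT.
  move/(Fpriv _ _ f'F fF) => ff'; move: fx; rewrite -ff' /= => ax.
  by move: xbc; rewrite !inE -ax (negbTE nab) (negbTE nac).
have gab : g a b = 1.
  by rewrite /g; case: existsP => // [[]]; exists (a, b, c); rewrite fF !eqxx.
have gac : g a c = 2.
  rewrite /g; case: existsP => [[f' /and3P [f'F /eqP fa /eqP fb]]|_].
    have : inT f'.1.1 (a, b, c) by rewrite fa /inT eqxx.
    move/(Fpriv _ _ f'F fF) => ff'; move: fb; rewrite -ff' /= => bc.
    by rewrite bc eqxx in nbc.
  by case: existsP => // [[]]; exists (a, b, c); rewrite fF !eqxx.
exists [:: a; b; c]; split.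
- rewrite /is_graph_cycle /= !inE (negbTE nab) (negbTE nac) (negbTE nbc) /=.
  by rewrite eab ebc esym eac.
- rewrite /rainbow /cycle_edge_colours /= /col gab gac !g0 ?inE ?eqxx ?orbT //.
- by move=> x; rewrite inE => /eqP ->; move: vf; rewrite /inT /= !inE.
Qed.
End Conv.

Inductive instr :=
| IInit (p : nat) | IZero (x : 'I_11) (p : nat) | ICopy (x y : 'I_11) (p : nat)
| IInc (x : 'I_11) (p : nat)
| IEq (x y : 'I_11) (p1 p2 : nat) | ILast (x : 'I_11) (p1 p2 : nat)
| IBit (x : 'I_11) (p1 p2 : nat)
| ISetF (b : bool) (p : nat) | ITestF (p1 p2 : nat) | IHalt (b : bool).

Definition rC : 'I_11 := @Ordinal 11 0 isT.
Definition rQ : 'I_11 := @Ordinal 11 1 isT.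
Definition rA : 'I_11 := @Ordinal 11 2 isT.
Definition rB : 'I_11 := @Ordinal 11 3 isT.
Definition rI : 'I_11 := @Ordinal 11 4 isT.
Definition rJ : 'I_11 := @Ordinal 11 5 isT.
Definition rK : 'I_11 := @Ordinal 11 6 isT.
Definition rP1 : 'I_11 := @Ordinal 11 7 isT.
Definition rP2 : 'I_11 := @Ordinal 11 8 isT.
Definition rP3 : 'I_11 := @Ordinal 11 9 isT.
Definition rRS : 'I_11 := @Ordinal 11 10 isT.

Definition prog (pc : nat) : instr :=
  match pc with
  | 0 => IInit 1
  | 1 => IEq rA rC 2 3
  | 2 => IEq rB rC 8 3
  | 3 => IInc rQ 4
  | 4 => IEq rB rC 5 7
  | 5 => IZero rB 6
  | 6 => IInc rA 1
  | 7 => IInc rB 1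
  | 8 => ILast rQ 13 9
  | 9 => IInc rC 10
  | 10 => IZero rQ 11
  | 11 => IZero rA 12
  | 12 => IZero rB 1
  | 13 => ITestF 17 14
  | 14 => IBit rP1 15 17
  | 15 => IBit rP2 16 17
  | 16 => IBit rP3 18 17
  | 17 => IEq rK rC 22 19
  | 18 => ISetF true 17
  | 19 => IInc rK 20
  | 20 => IInc rP2 21
  | 21 => IInc rP3 13
  | 22 => IEq rJ rC 28 23
  | 23 => IInc rJ 24
  | 24 => IZero rK 25
  | 25 => IInc rP1 26
  | 26 => IInc rP2 27
  | 27 => ICopy rP3 rRS 13
  | 28 => ITestF 29 39
  | 29 => IEq rI rC 38 30
  | 30 => IInc rI 31
  | 31 => IZero rK 32
  | 32 => IInc rP1 33
  | 33 => ICopy rRS rP1 34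
  | 34 => ICopy rP3 rP1 35
  | 35 => IZero rP2 36
  | 36 => IZero rJ 37
  | 37 => ISetF false 13
  | 38 => IHalt true
  | _ => IHalt false
  end.

Definition astate := (nat * bool * seq nat)%type.

Definition astep (N : nat) (bits : seq bool) (s : astate) : option astate :=
  let: (pc, fl, rs) := s in
  match prog pc with
  | IInit p => Some (p, fl, nseq 11 0)
  | IZero x p => Some (p, fl, set_nth 0 rs x 0)
  | ICopy x y p => Some (p, fl, set_nth 0 rs x (nth 0 rs y))
  | IInc x p => Some (p, fl, set_nth 0 rs x (nth 0 rs x).+1)
  | IEq x y p1 p2 =>
      Some (if (nth 0 rs x == nth 0 rs y) && (nth 0 rs x < N) then p1 else p2, fl, rs)
  | ILast x p1 p2 => Some (if (nth 0 rs x).+1 == N then p1 else p2, fl, rs)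
  | IBit x p1 p2 =>
      Some (if (nth 0 rs x < N) && nth false bits (nth 0 rs x) then p1 else p2, fl, rs)
  | ISetF b p => Some (p, b, rs)
  | ITestF p1 p2 => Some (if fl then p1 else p2, fl, rs)
  | IHalt _ => None
  end.

Fixpoint arun (N : nat) (bits : seq bool) (t : nat) (s : astate) : option astate :=
  match astep N bits s with
  | None => Some s
  | Some s' => if t is t'.+1 then arun N bits t' s' else None
  end.

Lemma arun_mono N bits t k s s' : arun N bits t s = Some s' -> arun N bits (t + k) s = Some s'.
Proof.
elim: t s => [|t IH] s /=.
  by case E: (astep N bits s) => [s''|] // [<-]; case: k => [|k] /=; rewrite E.
by case: (astep N bits s) => [s''|] // /IH.
Qed.

Lemma arun_inv N bits (Inv : astate -> nat -> Prop) :
  (forall s m, Inv s m -> astep N bits s = None \/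
     exists s' m', [/\ astep N bits s = Some s', Inv s' m' & m' < m]) ->
  forall m s, Inv s m -> exists s' m', [/\ arun N bits m s = Some s', Inv s' m' & astep N bits s' = None].
Proof.
move=> H.
suff S : forall M m, m <= M -> forall s, Inv s m -> exists s' m', [/\ arun N bits m s = Some s', Inv s' m' & astep N bits s' = None].
  by move=> m; apply: (S m).
elim=> [|M IH] m.
  rewrite leqn0 => /eqP -> s Is; case: (H _ _ Is) => [Hn|[s' [m' [_ _]]]] //.
  by exists s, 0; rewrite /= Hn.
move=> lm s Is; case: (H _ _ Is) => [Hn|[s' [m' [Hs Is' lt]]]].
  by exists s, m; case: m lm Is => [|m] _ Is; rewrite /= Hn.
have [s'' [m'' [R I2 H2]]] := IH m' (leq_trans lt lm : m' < M.+1) s' Is'.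
exists s'', m''; split => //.
case: m lm Is lt => // m lm Is lt; rewrite /= Hs.
by rewrite -(subnK (lt : m' <= m)) addnC; apply: arun_mono.
Qed.

Section Prog.
Variables (n : nat) (bits : seq bool).
Hypothesis n1 : 0 < n.
Local Notation N := (n * n).

Definition tb i j k := [&& nth false bits (i*n+j), nth false bits (j*n+k) & nth false bits (i*n+k)].
Definition found i m := has (fun q => tb i (q %/ n) (q %% n)) (iota 0 m).
Definition good i := found i N.
Definition allg i := all good (iota 0 i).

Definition D0 := 30 * (n*n*n) + 100.
Definition m1 c q d := D0 + 20 * ((n - c) * (n*n+1) - q) + d.
Definition m2 i j k d := 30 * (n*n*n - (i*(n*n) + j*n + k)) + d.

Definition Inv (s : astate) (m : nat) : Prop :=
  let: (pc, fl, rs) := s in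
  match pc with
  | 0 => fl = false /\ m = m1 0 0 11
  | 1 => exists c a b, c < n /\ a <= c /\ b <= c /\ fl = false /\
      rs = [:: c; a*c.+1+b; a; b; 0;0;0;0;0;0;0] /\ m = m1 c (a*c.+1+b) 10
  | 2 => exists c b, c < n /\ b <= c /\ fl = false /\
      rs = [:: c; c*c.+1+b; c; b; 0;0;0;0;0;0;0] /\ m = m1 c (c*c.+1+b) 9
  | 3 => exists c a b, c < n /\ a <= c /\ b <= c /\ ~~((a == c) && (b == c)) /\ fl = false /\
      rs = [:: c; a*c.+1+b; a; b; 0;0;0;0;0;0;0] /\ m = m1 c (a*c.+1+b) 8
  | 4 => exists c a b, c < n /\ a <= c /\ b <= c /\ ~~((a == c) && (b == c)) /\ fl = false /\
      rs = [:: c; (a*c.+1+b).+1; a; b; 0;0;0;0;0;0;0] /\ m = m1 c (a*c.+1+b).+1 14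
  | 5 => exists c a, c < n /\ a < c /\ fl = false /\
      rs = [:: c; (a*c.+1+c).+1; a; c; 0;0;0;0;0;0;0] /\ m = m1 c (a*c.+1+c).+1 13
  | 6 => exists c a, c < n /\ a < c /\ fl = false /\
      rs = [:: c; (a*c.+1+c).+1; a; 0; 0;0;0;0;0;0;0] /\ m = m1 c (a*c.+1+c).+1 12
  | 7 => exists c a b, c < n /\ a <= c /\ b < c /\ fl = false /\
      rs = [:: c; (a*c.+1+b).+1; a; b; 0;0;0;0;0;0;0] /\ m = m1 c (a*c.+1+b).+1 12
  | 8 => exists c, c < n /\ fl = false /\
      rs = [:: c; c*c.+1+c; c; c; 0;0;0;0;0;0;0] /\ m = m1 c (c*c.+1+c) 8
  | 9 => exists c, c.+1 < n /\ fl = false /\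
      rs = [:: c; c*c.+1+c; c; c; 0;0;0;0;0;0;0] /\ m = m1 c (c*c.+1+c) 7
  | 10 => exists c, c.+1 < n /\ fl = false /\
      rs = [:: c.+1; c*c.+1+c; c; c; 0;0;0;0;0;0;0] /\ m = m1 c (c*c.+1+c) 6
  | 11 => exists c, c.+1 < n /\ fl = false /\
      rs = [:: c.+1; 0; c; c; 0;0;0;0;0;0;0] /\ m = m1 c (c*c.+1+c) 5
  | 12 => exists c, c.+1 < n /\ fl = false /\
      rs = [:: c.+1; 0; 0; c; 0;0;0;0;0;0;0] /\ m = m1 c (c*c.+1+c) 4
  | 13 => exists i j k q a b, i < n /\ j < n /\ k < n /\ allg i /\ fl = found i (j*n+k) /\
      rs = [:: n.-1; q; a; b; i; j; k; i*n+j; j*n+k; i*n+k; i*n] /\ m = m2 i j k 21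
  | 14 => exists i j k q a b, i < n /\ j < n /\ k < n /\ allg i /\ fl = false /\ found i (j*n+k) = false /\
      rs = [:: n.-1; q; a; b; i; j; k; i*n+j; j*n+k; i*n+k; i*n] /\ m = m2 i j k 20
  | 15 => exists i j k q a b, i < n /\ j < n /\ k < n /\ allg i /\ fl = false /\ found i (j*n+k) = false /\
      nth false bits (i*n+j) /\
      rs = [:: n.-1; q; a; b; i; j; k; i*n+j; j*n+k; i*n+k; i*n] /\ m = m2 i j k 19
  | 16 => exists i j k q a b, i < n /\ j < n /\ k < n /\ allg i /\ fl = false /\ found i (j*n+k) = false /\
      nth false bits (i*n+j) /\ nth false bits (j*n+k) /\
      rs = [:: n.-1; q; a; b; i; j; k; i*n+j; j*n+k; i*n+k; i*n] /\ m = m2 i j k 18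
  | 17 => exists i j k q a b, i < n /\ j < n /\ k < n /\ allg i /\ fl = found i (j*n+k).+1 /\
      rs = [:: n.-1; q; a; b; i; j; k; i*n+j; j*n+k; i*n+k; i*n] /\ m = m2 i j k 16
  | 18 => exists i j k q a b, i < n /\ j < n /\ k < n /\ allg i /\ fl = false /\ found i (j*n+k) = false /\
      tb i j k /\
      rs = [:: n.-1; q; a; b; i; j; k; i*n+j; j*n+k; i*n+k; i*n] /\ m = m2 i j k 17
  | 19 => exists i j k q a b, i < n /\ j < n /\ k.+1 < n /\ allg i /\ fl = found i (j*n+k).+1 /\
      rs = [:: n.-1; q; a; b; i; j; k; i*n+j; j*n+k; i*n+k; i*n] /\ m = m2 i j k 15
  | 20 => exists i j k q a b, i < n /\ j < n /\ k.+1 < n /\ allg i /\ fl = found i (j*n+k).+1 /\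
      rs = [:: n.-1; q; a; b; i; j; k.+1; i*n+j; j*n+k; i*n+k; i*n] /\ m = m2 i j k 14
  | 21 => exists i j k q a b, i < n /\ j < n /\ k.+1 < n /\ allg i /\ fl = found i (j*n+k).+1 /\
      rs = [:: n.-1; q; a; b; i; j; k.+1; i*n+j; (j*n+k).+1; i*n+k; i*n] /\ m = m2 i j k 13
  | 22 => exists i j q a b, i < n /\ j < n /\ allg i /\ fl = found i (j*n+n.-1).+1 /\
      rs = [:: n.-1; q; a; b; i; j; n.-1; i*n+j; j*n+n.-1; i*n+n.-1; i*n] /\ m = m2 i j n.-1 15
  | 23 => exists i j q a b, i < n /\ j.+1 < n /\ allg i /\ fl = found i (j*n+n.-1).+1 /\
      rs = [:: n.-1; q; a; b; i; j; n.-1; i*n+j; j*n+n.-1; i*n+n.-1; i*n] /\ m = m2 i j n.-1 14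
  | 24 => exists i j q a b, i < n /\ j.+1 < n /\ allg i /\ fl = found i (j*n+n.-1).+1 /\
      rs = [:: n.-1; q; a; b; i; j.+1; n.-1; i*n+j; j*n+n.-1; i*n+n.-1; i*n] /\ m = m2 i j n.-1 13
  | 25 => exists i j q a b, i < n /\ j.+1 < n /\ allg i /\ fl = found i (j*n+n.-1).+1 /\
      rs = [:: n.-1; q; a; b; i; j.+1; 0; i*n+j; j*n+n.-1; i*n+n.-1; i*n] /\ m = m2 i j n.-1 12
  | 26 => exists i j q a b, i < n /\ j.+1 < n /\ allg i /\ fl = found i (j*n+n.-1).+1 /\
      rs = [:: n.-1; q; a; b; i; j.+1; 0; (i*n+j).+1; j*n+n.-1; i*n+n.-1; i*n] /\ m = m2 i j n.-1 11
  | 27 => exists i j q a b, i < n /\ j.+1 < n /\ allg i /\ fl = found i (j*n+n.-1).+1 /\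
      rs = [:: n.-1; q; a; b; i; j.+1; 0; (i*n+j).+1; (j*n+n.-1).+1; i*n+n.-1; i*n] /\ m = m2 i j n.-1 10
  | 28 => exists i q a b, i < n /\ allg i /\ fl = good i /\
      rs = [:: n.-1; q; a; b; i; n.-1; n.-1; i*n+n.-1; n.-1*n+n.-1; i*n+n.-1; i*n] /\ m = m2 i n.-1 n.-1 14
  | 29 => exists i q a b, i < n /\ allg i.+1 /\ fl = true /\
      rs = [:: n.-1; q; a; b; i; n.-1; n.-1; i*n+n.-1; n.-1*n+n.-1; i*n+n.-1; i*n] /\ m = m2 i n.-1 n.-1 13
  | 30 => exists i q a b, i.+1 < n /\ allg i.+1 /\ fl = true /\
      rs = [:: n.-1; q; a; b; i; n.-1; n.-1; i*n+n.-1; n.-1*n+n.-1; i*n+n.-1; i*n] /\ m = m2 i n.-1 n.-1 12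
  | 31 => exists i q a b, i.+1 < n /\ allg i.+1 /\ fl = true /\
      rs = [:: n.-1; q; a; b; i.+1; n.-1; n.-1; i*n+n.-1; n.-1*n+n.-1; i*n+n.-1; i*n] /\ m = m2 i n.-1 n.-1 11
  | 32 => exists i q a b, i.+1 < n /\ allg i.+1 /\ fl = true /\
      rs = [:: n.-1; q; a; b; i.+1; n.-1; 0; i*n+n.-1; n.-1*n+n.-1; i*n+n.-1; i*n] /\ m = m2 i n.-1 n.-1 10
  | 33 => exists i q a b, i.+1 < n /\ allg i.+1 /\ fl = true /\
      rs = [:: n.-1; q; a; b; i.+1; n.-1; 0; (i*n+n.-1).+1; n.-1*n+n.-1; i*n+n.-1; i*n] /\ m = m2 i n.-1 n.-1 9
  | 34 => exists i q a b, i.+1 < n /\ allg i.+1 /\ fl = true /\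
      rs = [:: n.-1; q; a; b; i.+1; n.-1; 0; (i*n+n.-1).+1; n.-1*n+n.-1; i*n+n.-1; (i*n+n.-1).+1] /\ m = m2 i n.-1 n.-1 8
  | 35 => exists i q a b, i.+1 < n /\ allg i.+1 /\ fl = true /\
      rs = [:: n.-1; q; a; b; i.+1; n.-1; 0; (i*n+n.-1).+1; n.-1*n+n.-1; (i*n+n.-1).+1; (i*n+n.-1).+1] /\ m = m2 i n.-1 n.-1 7
  | 36 => exists i q a b, i.+1 < n /\ allg i.+1 /\ fl = true /\
      rs = [:: n.-1; q; a; b; i.+1; n.-1; 0; (i*n+n.-1).+1; 0; (i*n+n.-1).+1; (i*n+n.-1).+1] /\ m = m2 i n.-1 n.-1 6
  | 37 => exists i q a b, i.+1 < n /\ allg i.+1 /\ fl = true /\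
      rs = [:: n.-1; q; a; b; i.+1; 0; 0; (i*n+n.-1).+1; 0; (i*n+n.-1).+1; (i*n+n.-1).+1] /\ m = m2 i n.-1 n.-1 5
  | 38 => allg n
  | 39 => ~~ allg n
  | _ => False
  end.

Lemma found0 i : found i 0 = false. Proof. by []. Qed.
Lemma foundS i m : found i m.+1 = found i m || tb i (m %/ n) (m %% n).
Proof. by rewrite /found -addn1 iotaD has_cat /= orbF. Qed.
Lemma divjk j k : k < n -> (j*n+k) %/ n = j.
Proof. by move=> kn; rewrite divnMDl // divn_small // addn0. Qed.
Lemma modjk j k : k < n -> (j*n+k) %% n = k.
Proof. by move=> kn; rewrite modnMDl modn_small. Qed.
Lemma foundjk i j k : k < n -> found i (j*n+k).+1 = found i (j*n+k) || tb i j k.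
Proof. by move=> kn; rewrite foundS divjk // modjk. Qed.
Lemma allgS i : allg i.+1 = allg i && good i.
Proof. by rewrite /allg -addn1 iotaD all_cat /= andbT. Qed.
Lemma idx_lt i j k : i < n -> j < n -> k < n -> i*(n*n) + j*n + k < n*n*n.
Proof. move=> hi hj hk; nia. Qed.
Lemma V_split c : c < n -> (n - c) * (n*n+1) = (n - c.+1) * (n*n+1) + (n*n+1).
Proof. move=> hc; nia. Qed.
Lemma q_bound a b c : a <= c -> b <= c -> c < n -> a * c.+1 + b < (n - c) * (n*n+1).
Proof. move=> ha hb hc; nia. Qed.
Lemma cc_bound c : c.+1 < n -> c * c.+1 + c + 2 <= n * n.
Proof. move=> hc; nia. Qed.

Ltac lsteq := repeat match goal with |- cons ?x ?l = cons ?y ?l' =>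
   refine (f_equal2 cons _ _); [ first [reflexivity | lia] | ] end; reflexivity.

Lemma allg_good i : i < n -> allg n -> good i.
Proof. by move=> hi /allP; apply; rewrite mem_iota. Qed.

Lemma step_inv s m : Inv s m -> astep N bits s = None \/
   exists s' m', [/\ astep N bits s = Some s', Inv s' m' & m' < m].
Proof.
have n1' := n1.
move: s => [[pc fl] rs].
case: pc => [|[|[|[|[|[|[|[|[|[|[|[|[|[|[|[|[|[|[|[|[|[|[|[|[|[|[|[|[|[|[|[|[|[|[|[|[|[|[|[|pc]]]]]]]]]]]]]]]]]]]]]]]]]]]]]]]]]]]]]]]] /=.

- (* 0 *) move=> [-> ->]; right; eexists; exists (m1 0 0 10); split => //.
    by exists 0, 0, 0; rewrite mul0n.
  by rewrite /m1; lia.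
- (* 1 *) move=> [c [a [b [hc [ha [hb [-> [-> ->]]]]]]]]; right; rewrite /astep /=.
  have aN : a < n * n by nia.
  rewrite aN andbT; case: eqP => [E|/eqP ne]; [subst a|].
    eexists; exists (m1 c (c*c.+1+b) 9); split => //; first by exists c, b.
    by rewrite /m1; lia.
  eexists; exists (m1 c (a*c.+1+b) 8); split => //.
    by exists c, a, b; rewrite (negbTE ne).
  by rewrite /m1; lia.
- (* 2 *) move=> [c [b [hc [hb [-> [-> ->]]]]]]; right; rewrite /astep /=.
  have bN : b < n * n by nia.
  rewrite bN andbT; case: eqP => [E|/eqP ne]; [subst b|].
    eexists; exists (m1 c (c*c.+1+c) 8); split => //; first by exists c.
    by rewrite /m1; lia.
  eexists; exists (m1 c (c*c.+1+b) 8); split => //.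
    by exists c, c, b; rewrite eqxx (negbTE ne).
  by rewrite /m1; lia.
- (* 3 *) move=> [c [a [b [hc [ha [hb [hn [-> [-> ->]]]]]]]]]; right; rewrite /astep /=.
  eexists; exists (m1 c (a*c.+1+b).+1 14); split => //; first by exists c, a, b.
  have := q_bound ha hb hc; rewrite /m1; lia.
- (* 4 *) move=> [c [a [b [hc [ha [hb [hn [-> [-> ->]]]]]]]]]; right; rewrite /astep /=.
  have bN : b < n * n by nia.
  rewrite bN andbT; case: eqP => [E|/eqP ne]; [subst b|].
    have ac : a < c by move: hn; rewrite eqxx andbT ltn_neqAle ha andbT.
    eexists; exists (m1 c (a*c.+1+c).+1 13); split => //; first by exists c, a.
    by rewrite /m1; lia.
  have bc : b < c by rewrite ltn_neqAle ne hb.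
  eexists; exists (m1 c (a*c.+1+b).+1 12); split => //; first by exists c, a, b.
  by rewrite /m1; lia.
- (* 5 *) move=> [c [a [hc [ha [-> [-> ->]]]]]]; right; rewrite /astep /=.
  eexists; exists (m1 c (a*c.+1+c).+1 12); split => //; first by exists c, a.
  by rewrite /m1; lia.
- (* 6 *) move=> [c [a [hc [ha [-> [-> ->]]]]]]; right; rewrite /astep /=.
  eexists; exists (m1 c (a*c.+1+c).+1 10); split => //.
    exists c, a.+1, 0; do 4 (split; first lia); split; first by lsteq.
    by congr m1; lia.
  by rewrite /m1; lia.
- (* 7 *) move=> [c [a [b [hc [ha [hb [-> [-> ->]]]]]]]]; right; rewrite /astep /=.
  eexists; exists (m1 c (a*c.+1+b).+1 10); split => //.
    exists c, a, b.+1; do 4 (split; first lia); split; first by lsteq.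
    by congr m1; lia.
  by rewrite /m1; lia.
- (* 8 *) move=> [c [hc [-> [-> ->]]]]; right; rewrite /astep /=.
  case: eqP => [E|ne].
    have cn : c = n.-1 by nia.
    eexists; exists (m2 0 0 0 21); split => //.
      exists 0, 0, 0, (c*c.+1+c), c, c; rewrite !mul0n; do 5 (split; first by []).
      by split; [rewrite cn | ].
    by rewrite /m1 /m2 /D0; lia.
  have cn : c.+1 < n by apply/negP => cn; apply: ne; nia.
  eexists; exists (m1 c (c*c.+1+c) 7); split => //; first by exists c.
  by rewrite /m1; lia.
- (* 9 *) move=> [c [hc [-> [-> ->]]]]; right; rewrite /astep /=.
  eexists; exists (m1 c (c*c.+1+c) 6); split => //; first by exists c.
  by rewrite /m1; lia.
- (* 10 *) move=> [c [hc [-> [-> ->]]]]; right; rewrite /astep /=.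
  eexists; exists (m1 c (c*c.+1+c) 5); split => //; first by exists c.
  by rewrite /m1; lia.
- (* 11 *) move=> [c [hc [-> [-> ->]]]]; right; rewrite /astep /=.
  eexists; exists (m1 c (c*c.+1+c) 4); split => //; first by exists c.
  by rewrite /m1; lia.
- (* 12 *) move=> [c [hc [-> [-> ->]]]]; right; rewrite /astep /=.
  eexists; exists (m1 c.+1 0 10); split => //.
    by exists c.+1, 0, 0; rewrite mul0n.
  have := V_split (ltnW hc); have := cc_bound hc; rewrite /m1; lia.

- (* 13 *) move=> [i [j [k [q [a [b [hi [hj [hk [ha [-> [-> ->]]]]]]]]]]]]; right; rewrite /astep /=.
  case: ifP => hf.
    eexists; exists (m2 i j k 16); split => //; last by rewrite /m2; lia.
    by exists i, j, k, q, a, b; rewrite foundjk // hf.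
  eexists; exists (m2 i j k 20); split => //; last by rewrite /m2; lia.
  by exists i, j, k, q, a, b.
- (* 14 *) move=> [i [j [k [q [a [b [hi [hj [hk [ha [-> [hf [-> ->]]]]]]]]]]]]]; right; rewrite /astep /=.
  have hN : i * n + j < n * n by nia.
  rewrite hN /=; case: ifP => hb.
    eexists; exists (m2 i j k 19); split => //; last by rewrite /m2; lia.
    by exists i, j, k, q, a, b.
  eexists; exists (m2 i j k 16); split => //; last by rewrite /m2; lia.
  by exists i, j, k, q, a, b; rewrite foundjk // hf /tb hb.
- (* 15 *) move=> [i [j [k [q [a [b [hi [hj [hk [ha [-> [hf [hb1 [-> ->]]]]]]]]]]]]]]; right; rewrite /astep /=.
  have hN : j * n + k < n * n by nia.
  rewrite hN /=; case: ifP => hb.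
    eexists; exists (m2 i j k 18); split => //; last by rewrite /m2; lia.
    by exists i, j, k, q, a, b.
  eexists; exists (m2 i j k 16); split => //; last by rewrite /m2; lia.
  by exists i, j, k, q, a, b; rewrite foundjk // hf /tb hb andbF.
- (* 16 *) move=> [i [j [k [q [a [b [hi [hj [hk [ha [-> [hf [hb1 [hb2 [-> ->]]]]]]]]]]]]]]]; right; rewrite /astep /=.
  have hN : i * n + k < n * n by nia.
  rewrite hN /=; case: ifP => hb.
    eexists; exists (m2 i j k 17); split => //; last by rewrite /m2; lia.
    by exists i, j, k, q, a, b; rewrite /tb hb1 hb2 hb.
  eexists; exists (m2 i j k 16); split => //; last by rewrite /m2; lia.
  by exists i, j, k, q, a, b; rewrite foundjk // hf /tb hb !andbF.
- (* 17 *) move=> [i [j [k [q [a [b [hi [hj [hk [ha [-> [-> ->]]]]]]]]]]]]; right; rewrite /astep /=.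
  have hN : k < n * n by nia.
  rewrite hN andbT; case: eqP => [E|ne].
    eexists; exists (m2 i j n.-1 15); split => //; last by rewrite /m2 E; lia.
    by exists i, j, q, a, b; rewrite -E.
  eexists; exists (m2 i j k 15); split => //; last by rewrite /m2; lia.
  by exists i, j, k, q, a, b; do !split => //; lia.
- (* 18 *) move=> [i [j [k [q [a [b [hi [hj [hk [ha [_ [hf [ht [-> ->]]]]]]]]]]]]]]; right; rewrite /astep /=.
  eexists; exists (m2 i j k 16); split => //; last by rewrite /m2; lia.
  by exists i, j, k, q, a, b; rewrite foundjk // ht orbT.
- (* 19 *) move=> [i [j [k [q [a [b [hi [hj [hk [ha [-> [-> ->]]]]]]]]]]]]; right; rewrite /astep /=.
  eexists; exists (m2 i j k 14); split => //; last by rewrite /m2; lia.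
  by exists i, j, k, q, a, b.
- (* 20 *) move=> [i [j [k [q [a [b [hi [hj [hk [ha [-> [-> ->]]]]]]]]]]]]; right; rewrite /astep /=.
  eexists; exists (m2 i j k 13); split => //; last by rewrite /m2; lia.
  by exists i, j, k, q, a, b.
- (* 21 *) move=> [i [j [k [q [a [b [hi [hj [hk [ha [-> [-> ->]]]]]]]]]]]]; right; rewrite /astep /=.
  eexists; exists (m2 i j k.+1 21); split => //.
    exists i, j, k.+1, q, a, b; do 4 (split; first by []); split; first by rewrite addnS.
    by split => //; lsteq.
  have := idx_lt hi hj hk; rewrite /m2; lia.
- (* 22 *) move=> [i [j [q [a [b [hi [hj [ha [-> [-> ->]]]]]]]]]]; right; rewrite /astep /=.
  have hN : j < n * n by nia.
  rewrite hN andbT; case: eqP => [E|ne].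
    eexists; exists (m2 i n.-1 n.-1 14); split => //; last by rewrite /m2 E; lia.
    exists i, q, a, b; do 2 (split; first by []); split; first by rewrite /good E; congr found; nia.
    by rewrite -E.
  eexists; exists (m2 i j n.-1 14); split => //; last by rewrite /m2; lia.
  by exists i, j, q, a, b; do !split => //; lia.
- (* 23 *) move=> [i [j [q [a [b [hi [hj [ha [-> [-> ->]]]]]]]]]]; right; rewrite /astep /=.
  eexists; exists (m2 i j n.-1 13); split => //; last by rewrite /m2; lia.
  by exists i, j, q, a, b.
- (* 24 *) move=> [i [j [q [a [b [hi [hj [ha [-> [-> ->]]]]]]]]]]; right; rewrite /astep /=.
  eexists; exists (m2 i j n.-1 12); split => //; last by rewrite /m2; lia.
  by exists i, j, q, a, b.
- (* 25 *) move=> [i [j [q [a [b [hi [hj [ha [-> [-> ->]]]]]]]]]]; right; rewrite /astep /=.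
  eexists; exists (m2 i j n.-1 11); split => //; last by rewrite /m2; lia.
  by exists i, j, q, a, b.
- (* 26 *) move=> [i [j [q [a [b [hi [hj [ha [-> [-> ->]]]]]]]]]]; right; rewrite /astep /=.
  eexists; exists (m2 i j n.-1 10); split => //; last by rewrite /m2; lia.
  by exists i, j, q, a, b.
- (* 27 *) move=> [i [j [q [a [b [hi [hj [ha [-> [-> ->]]]]]]]]]]; right; rewrite /astep /=.
  eexists; exists (m2 i j.+1 0 21); split => //.
    exists i, j.+1, 0, q, a, b; do 4 (split; first by []); split; first by congr found; lia.
    by split => //; lsteq.
  have := idx_lt hi hj n1; rewrite /m2; lia.
- (* 28 *) move=> [i [q [a [b [hi [ha [-> [-> ->]]]]]]]]; right; rewrite /astep /=.
  case: ifP => hg.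
    eexists; exists (m2 i n.-1 n.-1 13); split => //; last by rewrite /m2; lia.
    by exists i, q, a, b; rewrite allgS ha hg.
  eexists; exists 0; split => //; last by rewrite /m2; lia.
  by apply/negP => /(allg_good hi); rewrite hg.
- (* 29 *) move=> [i [q [a [b [hi [ha [-> [-> ->]]]]]]]]; right; rewrite /astep /=.
  have hN : i < n * n by nia.
  rewrite hN andbT; case: eqP => [E|ne].
    eexists; exists 0; split => //; last by rewrite /m2; lia.
    by rewrite /= -(prednK n1) -E.
  eexists; exists (m2 i n.-1 n.-1 12); split => //; last by rewrite /m2; lia.
  by exists i, q, a, b; do !split => //; lia.
- (* 30 *) move=> [i [q [a [b [hi [ha [-> [-> ->]]]]]]]]; right; rewrite /astep /=.
  eexists; exists (m2 i n.-1 n.-1 11); split => //; last by rewrite /m2; lia.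
  by exists i, q, a, b.
- (* 31 *) move=> [i [q [a [b [hi [ha [-> [-> ->]]]]]]]]; right; rewrite /astep /=.
  eexists; exists (m2 i n.-1 n.-1 10); split => //; last by rewrite /m2; lia.
  by exists i, q, a, b.
- (* 32 *) move=> [i [q [a [b [hi [ha [-> [-> ->]]]]]]]]; right; rewrite /astep /=.
  eexists; exists (m2 i n.-1 n.-1 9); split => //; last by rewrite /m2; lia.
  by exists i, q, a, b.
- (* 33 *) move=> [i [q [a [b [hi [ha [-> [-> ->]]]]]]]]; right; rewrite /astep /=.
  eexists; exists (m2 i n.-1 n.-1 8); split => //; last by rewrite /m2; lia.
  by exists i, q, a, b.
- (* 34 *) move=> [i [q [a [b [hi [ha [-> [-> ->]]]]]]]]; right; rewrite /astep /=.
  eexists; exists (m2 i n.-1 n.-1 7); split => //; last by rewrite /m2; lia.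
  by exists i, q, a, b.
- (* 35 *) move=> [i [q [a [b [hi [ha [-> [-> ->]]]]]]]]; right; rewrite /astep /=.
  eexists; exists (m2 i n.-1 n.-1 6); split => //; last by rewrite /m2; lia.
  by exists i, q, a, b.
- (* 36 *) move=> [i [q [a [b [hi [ha [-> [-> ->]]]]]]]]; right; rewrite /astep /=.
  eexists; exists (m2 i n.-1 n.-1 5); split => //; last by rewrite /m2; lia.
  by exists i, q, a, b.
- (* 37 *) move=> [i [q [a [b [hi [ha [_ [-> ->]]]]]]]]; right; rewrite /astep /=.
  eexists; exists (m2 i.+1 0 0 21); split => //.
    exists i.+1, 0, 0, q, a, b; do 4 (split; first by []); split; first by rewrite mul0n.
    by split => //; lsteq.
  have := idx_lt hi n1 n1; rewrite /m2; lia.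
- by left.
- by left.
- by [].
Qed.

Lemma prog_correct rs0 : exists s', arun N bits (m1 0 0 11) (0, false, rs0) = Some s' /\
  astep N bits s' = None /\ (prog s'.1.1 = IHalt (allg n)).
Proof.
have [s' [m' [R I H]]] := @arun_inv (n*n) bits Inv step_inv (m1 0 0 11) (0, false, rs0) (conj erefl erefl).
exists s'; split => //; split => //.
move: s' I H {R} => [[pc fl] rs].
case: pc => [|[|[|[|[|[|[|[|[|[|[|[|[|[|[|[|[|[|[|[|[|[|[|[|[|[|[|[|[|[|[|[|[|[|[|[|[|[|[|[|pc]]]]]]]]]]]]]]]]]]]]]]]]]]]]]]]]]]]]]]]] //=.
- by move=> ->.
- by move=> /negbTE ->.
Qed.
End Prog.

Definition Cell := (bool * {ffun 'I_11 -> bool})%type.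
Notation Sym := 'I_(#|{: Cell}|).+3.
Definition c0 : Cell := (false, [ffun => false]).
Definition c1 : Cell := (true, [ffun => false]).

Definition decC (a : Sym) : option Cell :=
  if nat_of_ord a == 0 then None else if nat_of_ord a == 1 then Some c0 else if nat_of_ord a == 2 then Some c1
  else Some (nth c0 (enum {: Cell}) (nat_of_ord a - 3)).
Definition encC (c : Cell) : Sym := inord (3 + index c (enum {: Cell})).

Lemma decC_encC c : decC (encC c) = Some c.
Proof.
have hi : index c (enum {: Cell}) < #|{: Cell}|.
  by rewrite cardE index_mem mem_enum.
rewrite /decC /encC inordK; last by lia.
by rewrite addKn nth_index // mem_enum.
Qed.

Lemma decC_None (a : Sym) : (decC a == None) = (a == ord0).
Proof. by rewrite /decC -val_eqE /=; case: (nat_of_ord a) => [|[|[|k]]]. Qed.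

Definition MS := (('I_40 * bool * (bool * bool)) + ('I_40 * bool))%type.
Definition ms0 : MS := inl (ord0, false, (true, false)).
Notation St := 'I_(#|{: MS}|).+1.
Definition encS (m : MS) : St := inord (index m (enum {: MS})).
Definition decS (q : St) : MS := nth ms0 (enum {: MS}) q.

Lemma decS_encS m : decS (encS m) = m.
Proof.
rewrite /decS /encS inordK ?nth_index ?mem_enum //.
have h : index m (enum {: MS}) < #|{: MS}| by rewrite cardE index_mem mem_enum.
lia.
Qed.

Definition setf (fl : {ffun 'I_11 -> bool}) x v := [ffun y => if y == x then v else fl y].

Definition ftr (ins : instr) (t : bool * bool) (c : Cell) : (bool * bool) * Cell :=
  let: (b, fl) := c in let: (fst, acc) := t in
  match ins with
  | IInit _ => ((false, acc), (b, [ffun _ => fst]))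
  | IZero x _ => ((false, acc), (b, setf fl x fst))
  | ICopy x y _ => ((false, acc), (b, setf fl x (fl y)))
  | IInc x _ => ((false, fl x), (b, setf fl x acc))
  | IEq x y _ _ => ((false, acc || fl x && fl y), (b, fl))
  | ILast x _ _ => ((false, fl x), (b, fl))
  | IBit x _ _ => ((false, acc || fl x && b), (b, fl))
  | _ => ((false, acc), (b, fl))
  end.

Definition nextpc (ins : instr) (fl acc : bool) : nat * bool :=
  match ins with
  | IInit p | IZero _ p | ICopy _ _ p | IInc _ p => (p, fl)
  | IEq _ _ p1 p2 | ILast _ p1 p2 | IBit _ p1 p2 => (if acc then p1 else p2, fl)
  | ISetF b p => (p, b)
  | ITestF p1 p2 => (if fl then p1 else p2, fl)
  | IHalt _ => (0, fl)
  end.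

Definition delta (q : St) (a : Sym) : option (St * Sym * move) :=
  match decS q with
  | inl (pc, fl, t) =>
    match prog pc with
    | IHalt _ => None
    | ins => match decC a with
             | None => if t.1 then None else
                 let: (p', fl') := nextpc ins fl t.2 in
                 Some (encS (inr (inord p', fl')), ord0, MoveL)
             | Some c => let: (t', c') := ftr ins t c in
                 Some (encS (inl (pc, fl, t')), encC c', MoveR)
             end
    end
  | inr (pc, fl) => match decC a with
    | None => Some (encS (inl (pc, fl, (true, false))), a, MoveR)
    | Some _ => Some (q, a, MoveL)
    end
  end.

Definition accept (q : St) : bool :=
  match decS q with
  | inl (pc, _, _) => match prog pc with IHalt b => b | IInit _ => true | _ => false end
  | inr _ => false
  end.

Definition Mach : TM := @Build_TM #|{: MS}| #|{: Cell}| (encS ms0) delta accept.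

Fixpoint stepn (k : nat) (c : config Mach) : option (config Mach) :=
  if k is k'.+1 then (if step c is Some c' then stepn k' c' else None) else Some c.

Lemma stepn_add k1 k2 c c1 : stepn k1 c = Some c1 -> stepn (k1 + k2) c = stepn k2 c1.
Proof.
elim: k1 c => [|k1 IH] c /=; first by case=> ->.
by case: (step c) => // c'; apply: IH.
Qed.

Lemma run_stepn k t c c' : stepn k c = Some c' -> run (k + t) c = run t c'.
Proof.
elim: k c => [|k IH] c /=; first by case=> ->.
case E: (step c) => [c2|] // H.
exact: IH.
Qed.

Lemma run_mono t k (c c' : config Mach) : run t c = Some c' -> run (t + k) c = Some c'.
Proof.
elim: t c => [|t IH] c /=.
  by case E: (step c) => [c2|] // [<-]; case: k => [|k] /=; rewrite E.
by case: (step c) => [c2|] // /IH.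
Qed.

Lemma stepR q L h R q' b : tm_delta q h = Some (q', b, MoveR) ->
  step (Config q L h R) = Some (@Config Mach q' (b :: L) (head ord0 R) (behead R)).
Proof. by rewrite /step /= => ->; case: R. Qed.

Lemma stepL q L h R q' b : tm_delta q h = Some (q', b, MoveL) ->
  step (Config q L h R) = Some (@Config Mach q' (behead L) (head ord0 L) (b :: R)).
Proof. by rewrite /step /= => ->; case: L. Qed.

Definition nonhalt (i : instr) := if i is IHalt _ then false else true.

Lemma delta_cell (pc : 'I_40) fl t a c : nonhalt (prog pc) -> decC a = Some c ->
  delta (encS (inl (pc, fl, t))) a =
  Some (encS (inl (pc, fl, (ftr (prog pc) t c).1)), encC (ftr (prog pc) t c).2, MoveR).
Proof.
rewrite /delta decS_encS => nh ->.
by case: (prog pc) nh => //= *; case: (ftr _ t c) => [t' c'].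
Qed.

Lemma delta_end (pc : 'I_40) fl t : nonhalt (prog pc) -> t.1 = false ->
  delta (encS (inl (pc, fl, t))) ord0 =
  Some (encS (inr (inord (nextpc (prog pc) fl t.2).1, (nextpc (prog pc) fl t.2).2)), ord0, MoveL).
Proof.
rewrite /delta decS_encS => nh t1.
have -> : decC ord0 = None by apply/eqP; rewrite decC_None.
by rewrite t1; case: (prog pc) nh.
Qed.

Lemma delta_lcell (pc : 'I_40) fl a : a != ord0 ->
  delta (encS (inr (pc, fl))) a = Some (encS (inr (pc, fl)), a, MoveL).
Proof.
rewrite /delta decS_encS -decC_None; by case: (decC a).
Qed.

Lemma delta_lend (pc : 'I_40) fl :
  delta (encS (inr (pc, fl))) ord0 = Some (encS (inl (pc, fl, (true, false))), ord0, MoveR).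
Proof.
rewrite /delta decS_encS.
have -> : decC ord0 = None by apply/eqP; rewrite decC_None.
by [].
Qed.

Fixpoint sweep (ins : instr) (t : bool * bool) (cs : seq Cell) : seq Cell * (bool * bool) :=
  match cs with
  | [::] => ([::], t)
  | c :: cs' => let: (t', c') := ftr ins t c in let: (out, tf) := sweep ins t' cs' in (c' :: out, tf)
  end.

Lemma ftr_first ins t c : (ftr ins t c).1.1 = false.
Proof. by case: c t => b fl [f a]; case: ins. Qed.

Lemma sweep_cons ins t c cs : sweep ins t (c :: cs) =
  ((ftr ins t c).2 :: (sweep ins (ftr ins t c).1 cs).1, (sweep ins (ftr ins t c).1 cs).2).
Proof. by rewrite /=; case: (ftr ins t c) => t' c'; case: (sweep ins t' cs). Qed.

Lemma sweep_size ins t cs : size (sweep ins t cs).1 = size cs.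
Proof. by elim: cs t => [|c cs IH] t //; rewrite sweep_cons /= IH. Qed.

Lemma sweep_first ins t c cs : (sweep ins t (c :: cs)).2.1 = false.
Proof.
elim: cs c t => [|c2 cs IH] c t; rewrite sweep_cons /=; first exact: ftr_first.
exact: IH.
Qed.

Lemma rsweep (pc : 'I_40) fl t cs ss Lr pad : nonhalt (prog pc) ->
  map decC ss = map Some cs -> all (eq_op^~ ord0) pad ->
  stepn (size cs) (@Config Mach (encS (inl (pc, fl, t))) Lr (head ord0 (ss ++ pad)) (behead (ss ++ pad)))
  = Some (@Config Mach (encS (inl (pc, fl, (sweep (prog pc) t cs).2)))
         (rev (map encC (sweep (prog pc) t cs).1) ++ Lr) ord0 (behead pad)).
Proof.
move=> nh; elim: cs ss t Lr => [|c cs IH] [|s ss] t Lr //=.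
  by move=> _; case: pad => [|p pad] // /andP [/eqP -> _].
case=> ds Hss Hp.
rewrite (stepR _ _ (delta_cell fl t nh ds)).
rewrite (IH _ _ _ Hss Hp); case: (ftr (prog pc) t c) => [t1 c1] /=; case: (sweep (prog pc) t1 cs) => [out tf] /=.
by rewrite rev_cons cat_rcons.
Qed.

Lemma lsweep (pc : 'I_40) fl xs L0 R : all (fun x => x != ord0) xs -> all (eq_op^~ ord0) L0 ->
  stepn (size xs) (@Config Mach (encS (inr (pc, fl))) (behead (xs ++ L0)) (head ord0 (xs ++ L0)) R)
  = Some (@Config Mach (encS (inr (pc, fl))) (behead L0) ord0 (rev xs ++ R)).
Proof.
move=> + HL; elim: xs R => [|x xs IH] R /=.
  by case: L0 HL => [|l L0] // /andP [/eqP -> _].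
case/andP=> nx Hx.
rewrite (stepL _ _ (delta_lcell pc fl nx)) IH //.
by rewrite rev_cons cat_rcons.
Qed.

Lemma stepn1 (c c' : config Mach) : step c = Some c' -> stepn 1 c = Some c'.
Proof. by rewrite /= => ->. Qed.

Definition tconf (pc : 'I_40) fl (cs : seq Cell) (c : config Mach) : Prop :=
  exists L0 pad ss, [/\ c = @Config Mach (encS (inl (pc, fl, (true, false)))) L0
                            (head ord0 (ss ++ pad)) (behead (ss ++ pad)),
     all (eq_op^~ ord0) L0, all (eq_op^~ ord0) pad & map decC ss = map Some cs].

Lemma encC_nz c : encC c != ord0.
Proof. by rewrite -decC_None decC_encC. Qed.

Lemma pass (pc : 'I_40) fl cs c : nonhalt (prog pc) -> cs != [::] -> tconf pc fl cs c ->
  let out := (sweep (prog pc) (true, false) cs).1 in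
  let tf := (sweep (prog pc) (true, false) cs).2 in
  exists c', stepn (2 * size cs + 2) c = Some c' /\
     tconf (inord (nextpc (prog pc) fl tf.2).1) (nextpc (prog pc) fl tf.2).2 out c'.
Proof.
move=> nh ne [L0 [pad [ss [-> HL Hp Hd]]]] out tf.
have h1 := rsweep fl (true, false) L0 nh Hd Hp.
have tf1 : tf.1 = false.
  by rewrite /tf; case: (cs) ne => // c1 cs1 _; exact: sweep_first.
have h2 := stepL (rev (map encC out) ++ L0) (behead pad) (delta_end fl nh tf1).
have nz : all (fun x => x != ord0) (rev (map encC out)).
  by rewrite all_rev; apply/allP => x /mapP [y _ ->]; exact: encC_nz.
have h3 := lsweep (inord (nextpc (prog pc) fl tf.2).1) (nextpc (prog pc) fl tf.2).2 (ord0 :: behead pad) nz HL.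
have h4 := stepR (behead L0) (rev (rev (map encC out)) ++ ord0 :: behead pad) (delta_lend (inord (nextpc (prog pc) fl tf.2).1) (nextpc (prog pc) fl tf.2).2).
have -> : 2 * size cs + 2 = size cs + (1 + (size (rev (map encC out)) + 1)).
  rewrite size_rev size_map /out sweep_size; set k := size cs; lia.
rewrite (stepn_add _ h1) (stepn_add _ (stepn1 h2)) (stepn_add _ h3) (stepn1 h4).
eexists; split; first by [].
exists (ord0 :: behead L0), (ord0 :: behead pad), (map encC out); split.
- by rewrite revK.
- by move: HL; case: (L0) => //= l L1 /andP [].
- by move: Hp; case: (pad) => //= p pad1 /andP [].
- by rewrite -map_comp; apply: eq_map => x /=; rewrite decC_encC.
Qed.

Lemma sweep_gen ins (T : nat -> bool * bool) (C C' : nat -> Cell) :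
  (forall p, ftr ins (T p) (C p) = (T p.+1, C' p)) ->
  forall off len, sweep ins (T off) (map C (iota off len)) = (map C' (iota off len), T (off + len)).
Proof.
move=> H off len; elim: len off => [|len IH] off /=; first by rewrite addn0.
by rewrite H IH addSnnS.
Qed.

Lemma sweep_gen0 ins (T : nat -> bool * bool) (C C' : nat -> Cell) len :
  T 0 = (true, false) -> (forall p, ftr ins (T p) (C p) = (T p.+1, C' p)) ->
  sweep ins (true, false) (map C (iota 0 len)) = (map C' (iota 0 len), T len).
Proof. by move=> <- H; rewrite (sweep_gen H). Qed.

Section Sim.
Variable bits : seq bool.
Local Notation N := (size bits).

Definition cellAt (rs : seq nat) p : Cell := (nth false bits p, [ffun x : 'I_11 => nth 0 rs x == p]).
Definition cells rs := map (cellAt rs) (iota 0 N).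

Lemma setf_cell rs (x : 'I_11) v p :
  setf [ffun y : 'I_11 => nth 0 rs y == p] x (v == p) = [ffun y : 'I_11 => nth 0 (set_nth 0 rs x v) y == p].
Proof.
apply/ffunP => y; rewrite !ffunE nth_set_nth /=.
case: (y =P x) => [->|ne]; first by rewrite !eqxx.
have ne' : (y : nat) != x by apply/eqP => E; apply: ne; exact: val_inj.
by rewrite (negbTE ne') ?(introF eqP ne).
Qed.

Lemma sim_pass pc fl rs pc' fl' rs' cs :
  astep N bits (pc, fl, rs) = Some (pc', fl', rs') ->
  size cs = N -> map fst cs = map (nth false bits) (iota 0 N) ->
  (~~ (if prog pc is IInit _ then true else false) -> cs = cells rs) ->
  (sweep (prog pc) (true, false) cs).1 = cells rs' /\
  nextpc (prog pc) fl (sweep (prog pc) (true, false) cs).2.2 = (pc', fl').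
Proof.
move=> + scs fcs Hcs; rewrite /astep.
case: (prog pc) Hcs => [p|x p|x y p|x p|x y p1 p2|x p1 p2|x p1 p2|b p|p1 p2|b] Hcs //; case => <- <- <-.
- pose C p := nth c0 cs p.
  have hb : forall q, (nth c0 cs q).1 = nth false bits q.
    move=> q; case: (ltnP q (size cs)) => hq.
      rewrite -(nth_map c0 false fst hq) fcs (nth_map 0) ?size_iota -?scs // nth_iota //.
    by rewrite !nth_default // -scs.
  have -> : cs = map C (iota 0 N) by rewrite -scs /C -/(mkseq _ _) mkseq_nth.
  rewrite (@sweep_gen0 _ (fun p => (p == 0, false)) C (cellAt (nseq 11 0))) //.
  move=> q; rewrite /C /cellAt; case: (nth c0 cs q) (hb q) => b f /= ->.
  have h : forall k, nth 0 (nseq 11 0) k = 0 by move=> k; rewrite nth_nseq; case: ifP.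
  congr (_, (_, _)); apply/ffunP => z; rewrite !ffunE.
  by rewrite -[[:: 0; 0; 0; 0; 0; 0; 0; 0; 0; 0; 0]]/(nseq 11 0) h eq_sym.
- rewrite Hcs // /cells (@sweep_gen0 _ (fun p => (p == 0, false)) _ (cellAt (set_nth 0 rs x 0))) //.
  by move=> q; rewrite /cellAt /= -setf_cell eq_sym.
- rewrite Hcs // /cells (@sweep_gen0 _ (fun p => (p == 0, false)) _ (cellAt (set_nth 0 rs x (nth 0 rs y)))) //.
  by move=> q; rewrite /cellAt /= -setf_cell ffunE.
- rewrite Hcs // /cells (@sweep_gen0 _ (fun p => (p == 0, (nth 0 rs x).+1 == p)) _ (cellAt (set_nth 0 rs x (nth 0 rs x).+1))) //.
  by move=> q; rewrite /cellAt /= -setf_cell ffunE eqSS.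
- rewrite Hcs // /cells (@sweep_gen0 _ (fun p => (p == 0, (nth 0 rs x == nth 0 rs y) && (nth 0 rs x < p))) _ (cellAt rs)) //; first by rewrite ltn0 andbF.
  move=> q; rewrite /cellAt /= !ffunE; congr (_, _, _).
  set a := nth 0 rs x; set b := nth 0 rs y.
  rewrite ltnS; case: ltngtP => h /=; rewrite ?andbT ?andbF ?orbF //.
  by rewrite h eq_sym.
- rewrite Hcs // /cells (@sweep_gen0 _ (fun p => (p == 0, (nth 0 rs x).+1 == p)) _ (cellAt rs)) //.
  by move=> q; rewrite /cellAt /= !ffunE eqSS.
- rewrite Hcs // /cells (@sweep_gen0 _ (fun p => (p == 0, (nth 0 rs x < p) && nth false bits (nth 0 rs x))) _ (cellAt rs)) //.
  move=> q; rewrite /cellAt /= !ffunE; congr (_, _, _).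
  set a := nth 0 rs x.
  rewrite ltnS; case: ltngtP => h /=; rewrite ?andbF ?orbF //.
  by rewrite h.
- rewrite Hcs // /cells (@sweep_gen0 _ (fun p => (p == 0, false)) _ (cellAt rs)) //.
- rewrite Hcs // /cells (@sweep_gen0 _ (fun p => (p == 0, false)) _ (cellAt rs)) //.
Qed.
End Sim.

Definition okins (i : instr) : bool :=
  match i with
  | IInit p | IZero _ p | ICopy _ _ p | IInc _ p | ISetF _ p => (0 < p < 40)
  | IEq _ _ p1 p2 | ILast _ p1 p2 | IBit _ p1 p2 | ITestF p1 p2 => (0 < p1 < 40) && (0 < p2 < 40)
  | IHalt _ => true
  end.

Lemma prog_ok pc : okins (prog pc).
Proof. by do 40 (case: pc => [|pc] //). Qed.

Lemma astep_pc N bits pc fl rs pc' fl' rs' :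
  astep N bits (pc, fl, rs) = Some (pc', fl', rs') -> 0 < pc' < 40.
Proof.
rewrite /astep; have := prog_ok pc.
case: (prog pc) => [p|x p|x y p|x p|x y p1 p2|x p1 p2|x p1 p2|b p|p1 p2|b] //= H [<- _ _] //;
  by case: ifP => _; case/andP: H.
Qed.

Section Sim2.
Variable bits : seq bool.
Local Notation N := (size bits).
Hypothesis N1 : 0 < N.

Definition SR (s : astate) (c : config Mach) : Prop :=
  let: (pc, fl, rs) := s in pc < 40 /\
  exists cs, [/\ tconf (inord pc) fl cs c, size cs = N,
                 map fst cs = map (nth false bits) (iota 0 N) & (pc != 0 -> cs = cells bits rs)].

Lemma prog_inord pc : pc < 40 -> prog (@inord 39 pc) = prog pc.
Proof. by move=> h; rewrite inordK. Qed.

Lemma sim_step s s' c : astep N bits s = Some s' -> SR s c ->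
  exists c', stepn (2 * N + 2) c = Some c' /\ SR s' c'.
Proof.
move: s s' => [[pc fl] rs] [[pc' fl'] rs'] H [hpc [cs [Ht scs fcs Hcs]]].
have nh : nonhalt (prog (@inord 39 pc)).
  by rewrite prog_inord //; move: H; rewrite /astep; case: (prog pc).
have ne : cs != [::] by case: (cs) scs => //= sE; move: N1; rewrite -sE.
have [c' [Hc' Ht']] := pass nh ne Ht.
have [h1 h2] : (sweep (prog pc) (true, false) cs).1 = cells bits rs' /\
  nextpc (prog pc) fl (sweep (prog pc) (true, false) cs).2.2 = (pc', fl').
  apply: sim_pass H scs fcs _ => hI; apply: Hcs; apply: contra hI => /eqP ->.
  by [].
move: Hc' Ht'; rewrite prog_inord // scs h1 h2 /= => Hc' Ht'.
exists c'; split => //.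
have /andP [p0 p40] := astep_pc H.
split => //; exists (cells bits rs'); split => //.
- by rewrite /cells size_map size_iota.
- by rewrite /cells -map_comp.
Qed.

Lemma halt_step s c : astep N bits s = None -> SR s c -> step c = None.
Proof.
move: s => [[pc fl] rs] H [hpc [cs [[L0 [pad [ss [-> _ _ _]]]] _ _ _]]].
rewrite /step /= /delta decS_encS prog_inord //.
by move: H; rewrite /astep; case: (prog pc).
Qed.

Lemma sim_run t s sh c : arun N bits t s = Some sh -> SR s c ->
  exists ch, run ((2 * N + 2) * t) c = Some ch /\ SR sh ch /\ step ch = None.
Proof.
elim: t s c => [|t IH] s c /=.
  case E: (astep N bits s) => [s2|] // [<-] HS.
  exists c; rewrite muln0 /= (halt_step E HS); split => //.
case E: (astep N bits s) => [s'|] HA HS.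
  have [c' [Hc' HS']] := sim_step E HS.
  have [ch [Hr [HSh Hst]]] := IH _ _ HA HS'.
  exists ch; split => //; by rewrite mulnS (run_stepn _ Hc').
move: HA => [<-]; exists c; split; last by split => //; exact: halt_step E HS.
have h0 : @run Mach 0 c = Some c by rewrite /= (halt_step E HS).
by have := run_mono ((2 * N + 2) * t.+1) h0.
Qed.
End Sim2.

Lemma nth_allpairs (A B C : Type) (f : A -> B -> C) (s : seq A) (t : seq B) a0 b0 c0 i j :
  i < size s -> j < size t ->
  nth c0 [seq f a b | a <- s, b <- t] (i * size t + j) = f (nth a0 s i) (nth b0 t j).
Proof.
elim: s i => [|x s IH] [|i] // hi hj; rewrite allpairs_cons nth_cat size_map.
  by rewrite mul0n add0n hj (nth_map b0).
rewrite ifN; last by rewrite -leqNgt mulSn -addnA leq_addr.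
by rewrite mulSn -addnA addKn IH.
Qed.

Lemma nth_encode n (e : rel 'I_n) i j (hi : i < n) (hj : j < n) :
  nth false (encode_graph e) (i * n + j) = e (Ordinal hi) (Ordinal hj).
Proof.
rewrite /encode_graph.
have := @nth_allpairs _ _ _ e (enum 'I_n) (enum 'I_n) (Ordinal hi) (Ordinal hi) false i j.
rewrite size_enum_ord => ->; rewrite ?size_enum_ord //.
by congr (e _ _); apply: val_inj; rewrite /= nth_enum_ord.
Qed.

Lemma ord_eta' n (v : 'I_n) : Ordinal (ltn_ord v) = v.
Proof. by apply: val_inj. Qed.

Lemma allg_tri n (e : rel 'I_n) : allg n (encode_graph e) n <-> tricover e.
Proof.
split.
- move=> /allP H v.
  have n1 : 0 < n := leq_ltn_trans (leq0n v) (ltn_ord v).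
  have := H v; rewrite mem_iota add0n ltn_ord => /(_ isT).
  rewrite /good /found => /hasP [q]; rewrite mem_iota add0n => hq.
  have hj : q %/ n < n by rewrite ltn_divLR.
  have hk : q %% n < n by rewrite ltn_pmod.
  rewrite /tb !nth_encode ord_eta' => /and3P [h1 h2 h3].
  by exists (Ordinal hj), (Ordinal hk); rewrite h1 h2 h3.
- move=> tc; apply/allP => i; rewrite mem_iota add0n => hi.
  have n1 : 0 < n := leq_ltn_trans (leq0n i) hi.
  have [u [w /and3P [h1 h2 h3]]] := tc (Ordinal hi).
  apply/hasP; exists (u * n + w).
    by rewrite mem_iota add0n; have := ltn_ord u; have := ltn_ord w; nia.
  rewrite /tb divjk // modjk //.
  by rewrite !(nth_encode e) ?ltn_ord // !ord_eta' h1 h2 h3.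
Qed.

Lemma crx_iff n (e : rel 'I_n) : symmetric e -> irreflexive e ->
  crx_le 1 e 3 <-> allg n (encode_graph e) n.
Proof.
move=> es ei; rewrite allg_tri; split; first exact: crx_tri.
exact: tri_conv.
Qed.

Lemma run_halt t (c : config Mach) : step c = None -> run t c = Some c.
Proof. by case: t => [|t] /= ->. Qed.

Theorem theorem1 :
  exists M : TM,
    decides_graph_property_in_poly_time M (fun n e => crx_le 1 e 3).
Proof.
exists Mach, 400, 3 => n e esym eirr.
have sw : size (encode_graph e) = n * n by rewrite /encode_graph size_allpairs size_enum_ord.
have Hiff := crx_iff esym eirr.
case: (posnP n) => [n0|n1].
- subst n.
  have w0 : encode_graph e = [::] by apply/size0nil; rewrite sw.
  rewrite w0.
  have st : step (init_config Mach [::]) = None.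
    by rewrite /step /= /delta decS_encS.
  exists (init_config Mach [::]); split.
    exact: run_halt st.
  rewrite /= /accept decS_encS /=; split => // _; apply/Hiff.
  by rewrite w0.
set w := encode_graph e.
have N1 : 0 < size w by rewrite sw muln_gt0 n1.
have [s' [Har [Hst Hprog]]] := prog_correct w n1 [::].
have HS0 : SR w (0, false, [::]) (init_config Mach w).
  split => //; exists (map (fun b => (b, [ffun => false])) w); split => //.
  - exists [::], [::], (map (bit_sym Mach) w); split => //.
    + have i0 : (@inord 39 0) = ord0 by apply: val_inj; rewrite /= inordK.
      rewrite cats0 /init_config i0; by case: (map (bit_sym Mach) w).
    + rewrite -!map_comp; apply: eq_map => b /=.
      by case: b; rewrite /decC /bit_sym inordK.
  - by rewrite size_map.
  - by rewrite -map_comp map_id map_nth_iota0 // take_size.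
rewrite -sw in Har.
have [ch [Hr [HS _]]] := sim_run N1 Har HS0.
exists ch; split.
  have hT : m1 n 0 0 11 <= 200 * ((size w).+1 * (size w).+1).
    rewrite /m1 /D0 sw subn0 subn0; nia.
  have Hle : (2 * size w + 2) * m1 n 0 0 11 <= 400 * (size w).+1 ^ 3.
    rewrite (_ : 400 * (size w).+1 ^ 3 = (2 * size w + 2) * (200 * ((size w).+1 * (size w).+1))).
      by rewrite leq_mul2l hT orbT.
    rewrite !expnS expn0 muln1; lia.
  by rewrite -(subnKC Hle); apply: run_mono.
move: s' HS Hprog {Har Hst} => [[pc fl] rs] [hpc [cs [[L0 [pad [ss [-> _ _ _]]]] _ _ _]]] /= Hprog.
rewrite /accept decS_encS prog_inord // Hprog.
by split => H; apply/Hiff.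
Qed.
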